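(* Let $\mathcal{C}\subseteq\mathbb{R}^d$ be a closed convex set with $\mathbb{B}(r)\subseteq\mathcal{C}\subseteq\mathbb{B}(R)$, $0<r\le R$, let $\epsilon\in[0,1]$ and $\mathcal{C}_\epsilon:=(\sqrt{1-\epsilon}\,\mathcal{C}^\circ\oplus\sqrt{\epsilon}\,\mathbb{B}(r)^\circ)^\circ$. Define $\psi(\mathbf{w}):=\gamma_{\mathcal{C}_\epsilon}(\mathbf{w})^2$. Then for all $\mathbf{x},\mathbf{y}\in\mathbb{R}^d$, $$\psi\Big(\frac{\mathbf{x}+\mathbf{y}}{2}\Big)\le\frac{\psi(\mathbf{x})+\psi(\mathbf{y})}{2}-\frac{\epsilon}{4r^2}\|\mathbf{x}-\mathbf{y}\|^2.$$
   Context: $\mathbb{B}(\rho)$ is the closed Euclidean ball of radius $\rho$ at $0$. Support function $\sigma_{\mathcal{K}}(\mathbf{w})=\sup_{\mathbf{u}\in\mathcal{K}}\langle\mathbf{u},\mathbf{w}\rangle$; gauge function $\gamma_{\mathcal{K}}(\mathbf{w})=\inf\{\lambda>0:\mathbf{w}\in\lambda\mathcal{K}\}$; polar $\mathcal{K}^\circ=\{\mathbf{u}:\langle\mathbf{u},\mathbf{w}\rangle\le1\ \forall\mathbf{w}\in\mathcal{K}\}$ (so $\mathbb{B}(r)^\circ=\mathbb{B}(1/r)$). For closed convex sets $A,B$ containing $0$, $A\oplus B$ is the unique closed convex set with $\sigma_{A\oplus B}^2=\sigma_A^2+\sigma_B^2$. *)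

(* Defs.v *)
From HB Require Import structures.
From mathcomp Require Import all_boot all_order all_algebra.
From mathcomp Require Import all_classical all_reals all_analysis.
Set Implicit Arguments. Unset Strict Implicit. Unset Printing Implicit Defensive.
Import Order.TTheory GRing.Theory Num.Theory.
Import numFieldNormedType.Exports.
Local Open Scope classical_set_scope.
Local Open Scope ring_scope.

Section Defs.
Variables (R : realType) (d : nat).
Implicit Types (u w : 'rV[R]_d) (K : set 'rV[R]_d).

Definition dotp u w : R := \sum_(i < d) u 0 i * w 0 i.

Definition sqnorm u : R := dotp u u.

Definition cball0 (rho : R) : set 'rV[R]_d := [set u | sqnorm u <= rho ^+ 2].

Definition convex K : Prop :=
  forall u w (t : R), K u -> K w -> 0 <= t <= 1 -> K (t *: u + (1 - t) *: w).

Definition scale_set (c : R) K : set 'rV[R]_d := [set c *: u | u in K].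

(* support function sigma_K(w) = sup_{u in K} <u, w>
   (real-valued supremum; all sets to which it is applied below are bounded
   and nonempty, so it is the genuine supremum) *)
Definition support K w : R := sup [set dotp u w | u in K].

Definition gauge K w : R := inf [set l : R | 0 < l /\ scale_set l K w].

Definition polar K : set 'rV[R]_d := [set u | forall w, K w -> dotp u w <= 1].

(* A (+) B : the closed convex set with sigma_{A(+)B}^2 = sigma_A^2 + sigma_B^2,
   written out explicitly as the set whose support function is
   h = sqrt (sigma_A^2 + sigma_B^2) (h is sublinear, so this set is closed,
   convex and its support function is exactly h). *)
Definition oplus A B : set 'rV[R]_d :=
  [set u | forall w, dotp u w <= Num.sqrt (support A w ^+ 2 + support B w ^+ 2)].

End Defs.

(* Main.v *)
From Pilot Require Import Defs.
From HB Require Import structures.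
From mathcomp Require Import all_boot all_order all_algebra.
From mathcomp Require Import all_classical all_reals all_analysis.
From mathcomp Require Import ring lra.
Import Order.TTheory GRing.Theory Num.Theory.
Import numFieldNormedType.Exports.
Local Open Scope classical_set_scope.
Local Open Scope ring_scope.
Set Implicit Arguments. Unset Strict Implicit. Unset Printing Implicit Defensive.
Local Notation support := Pilot.Defs.support.

Section Helpers.
Variables (R : realType) (d : nat).
Implicit Types (u v w : 'rV[R]_d).

Lemma dotpC u w : dotp u w = dotp w u.
Proof. by apply: eq_bigr => i _; rewrite mulrC. Qed.

Lemma dotpDl u v w : dotp (u + v) w = dotp u w + dotp v w.
Proof. by rewrite /dotp -big_split; apply: eq_bigr => i _; rewrite mxE mulrDl. Qed.

Lemma dotpZl a u w : dotp (a *: u) w = a * dotp u w.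
Proof. by rewrite /dotp mulr_sumr; apply: eq_bigr => i _; rewrite mxE mulrA. Qed.

Lemma dotp0l w : dotp 0 w = 0.
Proof. by rewrite -(scale0r 0) dotpZl mul0r. Qed.

Lemma dotpDr u v w : dotp w (u + v) = dotp w u + dotp w v.
Proof. by rewrite dotpC dotpDl !(dotpC w). Qed.

Lemma dotpZr a u w : dotp w (a *: u) = a * dotp w u.
Proof. by rewrite dotpC dotpZl dotpC. Qed.

Lemma sqnorm_ge0 w : 0 <= sqnorm w.
Proof. by apply: sumr_ge0 => i _; rewrite -expr2 sqr_ge0. Qed.

Lemma sqnormZ a w : sqnorm (a *: w) = a ^+ 2 * sqnorm w.
Proof. by rewrite /sqnorm dotpZl dotpZr mulrA expr2. Qed.

Lemma sqnormD2 a b u w : sqnorm (a *: u + b *: w) =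
  a ^+ 2 * sqnorm u + 2 * a * b * dotp u w + b ^+ 2 * sqnorm w.
Proof.
rewrite /sqnorm !dotpDl !dotpDr !dotpZl !dotpZr (dotpC w u); ring.
Qed.

End Helpers.
Section Main.
Variables (R : realType) (d : nat).
Implicit Types (u v w : 'rV[R]_d) (K : set 'rV[R]_d).

Lemma polar_test K r v w : 0 < r -> cball0 r `<=` K -> polar K v ->
  dotp v w <= Num.sqrt (sqnorm w) / r.
Proof.
move=> r0 sK pv.
have := sqnorm_ge0 w; rewrite le_eqVlt => /orP[/eqP s0|s0].
  rewrite -s0 sqrtr0 mul0r; rewrite leNgt; apply/negP => p0.
  have Kz : K (2 / dotp v w *: w).
    by apply: sK; rewrite /cball0 /= sqnormZ -s0 mulr0 exprn_ge0 // ltW.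
  by have := pv _ Kz; rewrite dotpZr divfK ?gt_eqF //; lra.
set n := Num.sqrt (sqnorm w).
have n0 : 0 < n by rewrite sqrtr_gt0.
have : dotp v ((r / n) *: w) <= 1.
  apply: (pv _ (sK _ _)); rewrite /cball0 /= sqnormZ expr_div_n (sqr_sqrtr (ltW s0)).
  rewrite divfK ?lt0r_neq0 //.
move=> H; rewrite dotpZr in H.
have -> : dotp v w = n / r * (r / n * dotp v w).
  by field; rewrite !gt_eqF.
by rewrite -[leRHS]mulr1 ler_wpM2l // divr_ge0 // ltW.
Qed.

Definition good K := K 0 /\ forall w, exists M, forall u, K u -> dotp u w <= M.

Lemma good_has_sup K w : good K -> has_sup [set dotp u w | u in K].
Proof.
move=> [K0 Kb]; split; first by exists (dotp 0 w); exists 0.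
have [M HM] := Kb w; exists M => _ [u Ku <-]; exact: HM.
Qed.

Lemma support_ub K u w : good K -> K u -> dotp u w <= support K w.
Proof. by move=> gK Ku; apply: (sup_upper_bound (good_has_sup w gK)); exists u. Qed.

Lemma support_ge0 K w : good K -> 0 <= support K w.
Proof. by move=> gK; rewrite -(dotp0l w); apply: support_ub => //; case: gK. Qed.

Lemma support_le K w b : good K -> (forall u, K u -> dotp u w <= b) ->
  support K w <= b.
Proof.
move=> [K0 _] H; apply: ge_sup; first by exists (dotp 0 w); exists 0.
by move=> _ [u Ku <-]; exact: H.
Qed.

Lemma support_adh K w e : good K -> 0 < e ->
  exists2 u, K u & support K w - e < dotp u w.
Proof.
move=> gK e0; have [_ [u Ku <-] H] := sup_adherent e0 (good_has_sup w gK).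
by exists u.
Qed.

Lemma support_mid K x y : good K ->
  support K (2^-1 *: (x + y)) <= (support K x + support K y) / 2.
Proof.
move=> gK; apply: support_le => // u Ku.
rewrite dotpZr dotpDr.
have := support_ub x gK Ku; have := support_ub y gK Ku; lra.
Qed.

Lemma good_scale_polar K c r : 0 <= c -> 0 < r -> cball0 r `<=` K ->
  good (scale_set c (polar K)).
Proof.
move=> c0 r0 sK; split.
  exists 0; last by rewrite scaler0.
  by move=> w _; rewrite dotp0l ler01.
move=> w; exists (c * (Num.sqrt (sqnorm w) / r)) => _ [v pv <-].
by rewrite dotpZl ler_wpM2l // (polar_test _ r0 sK).
Qed.

Lemma ball_support r e w : 0 < r -> 0 <= e ->
  support (scale_set (Num.sqrt e) (polar (cball0 r))) w =
  Num.sqrt e * Num.sqrt (sqnorm w) / r.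
Proof.
move=> r0 e0.
have gB := good_scale_polar (sqrtr_ge0 e) r0 (@subset_refl _ (cball0 r)).
apply/eqP; rewrite eq_le; apply/andP; split.
  apply: support_le => // _ [v pv <-].
  rewrite dotpZl -mulrA ler_wpM2l ?sqrtr_ge0 //.
  exact: (polar_test _ r0 (@subset_refl _ (cball0 r))).
have [s0|s0] : 0 = sqnorm w \/ 0 < sqnorm w.
  by have := sqnorm_ge0 w; rewrite le_eqVlt => /orP[/eqP|]; auto.
  by rewrite -s0 sqrtr0 mulr0 mul0r support_ge0.
set n := Num.sqrt (sqnorm w).
have n0 : 0 < n by rewrite sqrtr_gt0.
have nn : n ^+ 2 = sqnorm w by rewrite sqr_sqrtr // ltW.
set v := (r * n)^-1 *: w.
have pv : polar (cball0 r) v.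
  move=> z; rewrite /cball0 /= => zr.
  rewrite dotpZl ler_pdivrMl ?mulr_gt0 // mulr1.
  set t := r / n.
  have t0 : 0 < t by rewrite divr_gt0.
  have tn : t * n = r by rewrite /t divfK // gt_eqF.
  have := sqnorm_ge0 (t *: w + (-1) *: z).
  rewrite sqnormD2 -nn -exprMn tn => H.
  rewrite -(ler_pM2l t0) mulrCA tn.

  nra.
apply: le_trans (support_ub w gB (_ : _ (Num.sqrt e *: v))); last by exists v.
rewrite dotpZl /v dotpZl -/(sqnorm w) -nn.
by rewrite le_eqVlt; apply/orP; left; apply/eqP; field; rewrite !gt_eqF.
Qed.

Lemma gauge_polar D w h : 0 <= h ->
  (forall u, D u -> dotp u w <= h) ->
  (forall e, 0 < e -> exists2 u, D u & h - e <= dotp u w) ->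
  gauge (polar D) w = h.
Proof.
move=> h0 Hub Hadh.
set E := [set l : R | 0 < l /\ scale_set l (polar D) w].
have mem : forall l, h < l -> E l.
  move=> l hl; have l0 : 0 < l by apply: le_lt_trans hl.
  split => //; exists (l^-1 *: w); last by rewrite scalerA divff ?gt_eqF // scale1r.
  move=> u Du; rewrite dotpZl dotpC ler_pdivrMl // mulr1.
  exact: le_trans (Hub _ Du) (ltW hl).
have lb : forall l, E l -> h <= l.
  move=> l [l0 [v pv vw]]; apply/ler_addgt0Pr => e e0.
  have [u Du Hu] := Hadh e e0.
  have : dotp u w <= l.
    by rewrite -vw dotpZr dotpC -[leRHS]mulr1; apply: ler_wpM2l; [exact: ltW | exact: (pv _ Du)].
  lra.
apply/eqP; rewrite eq_le; apply/andP; split.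
  apply/ler_addgt0Pr => e e0.
  apply: (ge_inf _ (mem _ _)); last by rewrite ltrDl.
  by exists 0 => l [l0 _]; exact: ltW.
apply: lb_le_inf; first by exists (h + 1); apply: mem; rewrite ltrDl.
exact: lb.
Qed.

Lemma sqrt_sum_sq_ge (a b : R) : 0 <= a -> a <= Num.sqrt (a ^+ 2 + b ^+ 2).
Proof.
move=> a0; apply: (le_trans (_ : a <= Num.sqrt (a ^+ 2))).
  by rewrite sqrtr_sqr ger0_norm.
by rewrite ler_sqrt ?addr_ge0 ?sqr_ge0 // lerDl sqr_ge0.
Qed.

Lemma cs2 (a b a' b' : R) : 0 <= a -> 0 <= b -> 0 <= a' -> 0 <= b' ->
  a * a' + b * b' <= Num.sqrt (a ^+ 2 + b ^+ 2) * Num.sqrt (a' ^+ 2 + b' ^+ 2).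
Proof.
move=> a0 b0 a'0 b'0.
rewrite -sqrtrM ?addr_ge0 ?sqr_ge0 //.
apply: (le_trans (_ : _ <= Num.sqrt ((a * a' + b * b') ^+ 2))).
  by rewrite sqrtr_sqr ger0_norm // addr_ge0 // mulr_ge0.
rewrite ler_sqrt ?mulr_ge0 ?addr_ge0 ?sqr_ge0 //.
have := sqr_ge0 (a * b' - b * a'); nra.
Qed.

Lemma oplus_ub A B u w : oplus A B u ->
  dotp u w <= Num.sqrt (support A w ^+ 2 + support B w ^+ 2).
Proof. by move=> Du; apply: Du. Qed.

Lemma oplus_adh A B w e : good A -> good B -> 0 < e ->
  exists2 u, oplus A B u &
    Num.sqrt (support A w ^+ 2 + support B w ^+ 2) - e <= dotp u w.
Proof.
move=> gA gB e0.
set a := support A w; set b := support B w.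
set hw := Num.sqrt (a ^+ 2 + b ^+ 2).
have a0 : 0 <= a by apply: support_ge0.
have b0 : 0 <= b by apply: support_ge0.
have ah : a <= hw by apply: sqrt_sum_sq_ge.
have bh : b <= hw by rewrite /hw addrC; apply: sqrt_sum_sq_ge.
have := sqrtr_ge0 (a ^+ 2 + b ^+ 2); rewrite -/hw le_eqVlt => /orP[/eqP hw0|hw0].
  exists 0; first by move=> w'; rewrite dotp0l sqrtr_ge0.
  by rewrite dotp0l -hw0; lra.
have e2 : 0 < e / 2 by rewrite divr_gt0.
have [u1 Au1 H1] := support_adh w gA e2.
have [u2 Bu2 H2] := support_adh w gB e2.
exists (hw^-1 *: (a *: u1 + b *: u2)).
  move=> w'; rewrite dotpZl dotpDl !dotpZl mulrC ler_pdivrMr //.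
  have H1' := support_ub w' gA Au1; have H2' := support_ub w' gB Bu2.
  have a'0 := support_ge0 w' gA; have b'0 := support_ge0 w' gB.
  apply: le_trans (_ : a * support A w' + b * support B w' <= _).
    by apply: lerD; apply: ler_wpM2l.
  by rewrite [leRHS]mulrC; apply: cs2.
rewrite dotpZl dotpDl !dotpZl mulrC ler_pdivlMr //.
rewrite -/a -/b in H1 H2.
have K1 : a * (a - e / 2) <= a * dotp u1 w by apply: ler_wpM2l => //; apply: ltW.
have K2 : b * (b - e / 2) <= b * dotp u2 w by apply: ler_wpM2l => //; apply: ltW.
have hh : hw ^+ 2 = a ^+ 2 + b ^+ 2 by rewrite sqr_sqrtr // addr_ge0 ?sqr_ge0.
nra.
Qed.

End Main.

Theorem mainTheorem3 (R : realType) (d : nat) (C : set 'rV[R]_d) (r Rad eps : R) :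
  closed C -> convex C ->
  0 < r -> r <= Rad ->
  cball0 r `<=` C -> C `<=` cball0 Rad ->
  0 <= eps <= 1 ->
  let Ceps := polar (oplus (scale_set (Num.sqrt (1 - eps)) (polar C))
                           (scale_set (Num.sqrt eps) (polar (cball0 r)))) in
  let psi := fun w : 'rV[R]_d => gauge Ceps w ^+ 2 in
  forall x y : 'rV[R]_d,
    psi (2^-1 *: (x + y)) <=
      (psi x + psi y) / 2 - eps / (4 * r ^+ 2) * sqnorm (x - y).
Proof.
move=> _ _ r0 _ sC _ /andP[e0 e1] Ceps psi x y.
pose A := scale_set (Num.sqrt (1 - eps)) (polar C).
pose B := scale_set (Num.sqrt eps) (polar (cball0 (d := d) r)).
have gA : good A by apply: good_scale_polar (sqrtr_ge0 _) r0 sC.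
have gB : good B by apply: good_scale_polar (sqrtr_ge0 _) r0 (@subset_refl _ _).
have psiE : forall w, psi w = support A w ^+ 2 + support B w ^+ 2.
  move=> w; rewrite /psi /Ceps (gauge_polar (h := Num.sqrt (support A w ^+ 2 + support B w ^+ 2))).
  - by rewrite sqr_sqrtr // addr_ge0 ?sqr_ge0.
  - exact: sqrtr_ge0.
  - by move=> u; apply: oplus_ub.
  - by move=> e' e'0; apply: oplus_adh.
set k := eps / r ^+ 2.
have GE : forall w, support B w ^+ 2 = k * sqnorm w.
  move=> w; rewrite /B ball_support // expr_div_n exprMn !sqr_sqrtr ?sqnorm_ge0 //.
  by rewrite /k mulrAC.
rewrite !psiE !GE.
have -> : eps / (4 * r ^+ 2) = k / 4 by rewrite /k; field; rewrite gt_eqF // exprn_gt0.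
have sm : sqnorm (2^-1 *: (x + y)) = sqnorm x / 4 + dotp x y / 2 + sqnorm y / 4.
  by rewrite scalerDr sqnormD2; field.
have sxy : sqnorm (x - y) = sqnorm x - 2 * dotp x y + sqnorm y.
  by rewrite -[x]scale1r -scaleN1r sqnormD2 scale1r; ring.
have Ek : k * sqnorm (2^-1 *: (x + y)) =
   (k * sqnorm x + k * sqnorm y) / 2 - k / 4 * sqnorm (x - y).
  by rewrite sm sxy; field.
rewrite Ek.
have Fm := support_mid x y gA.
have Fm0 := support_ge0 (2^-1 *: (x + y)) gA.
have Fx0 := support_ge0 x gA.
have Fy0 := support_ge0 y gA.
have Fsq : support A (2^-1 *: (x + y)) ^+ 2 <= (support A x ^+ 2 + support A y ^+ 2) / 2.
  apply: (le_trans (_ : _ <= ((support A x + support A y) / 2) ^+ 2)).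
    by rewrite lerXn2r // ?nnegrE // divr_ge0 // addr_ge0.
  have := sqr_ge0 (support A x - support A y); nra.
lra.
Qed.
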